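(* Let $K$ be an algebraically closed field complete with respect to a nontrivial nonarchimedean absolute value, let $a\in K^N$ and $r\in|K^*|$, and let $\mathcal{A}$ be a family of analytic functions on $\bar B(a,r)$. Assume there is a constant $C>0$ with $|\Psi(x)|\le C$ for all $x\in\bar B(a,r)$ and all $\Psi\in\mathcal{A}$. Then for all $x,y\in\bar B(a,r)$ and all $\Psi,\Lambda\in\mathcal{A}$, $$|\Psi(x)\Lambda(y)-\Psi(y)\Lambda(x)|\le\frac{C^2}{r}\|x-y\|.$$
   Context: For $x\in K^N$, $\|x\|=\max_i|x_i|$, and $\bar B(a,r)=\{x\in K^N:\|x-a\|\le r\}$. A formal power series $\Psi(x)=\sum_{i_1,\dots,i_N\ge0}c_{i_1\cdots i_N}(x_1-a_1)^{i_1}\cdots(x_N-a_N)^{i_N}$ with $c_{i_1\cdots i_N}\in K$ is analytic on $\bar B(a,r)$ if $|c_{i_1\cdots i_N}|\,r^{i_1+\cdots+i_N}\to0$ as $i_1+\cdots+i_N\to\infty$; it then defines a function $\Psi:\bar B(a,r)\to K$. *)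

(* Defs.v *)
From mathcomp Require Import all_boot all_order all_algebra.
From mathcomp Require Import boolp classical_sets reals.
Set Implicit Arguments. Unset Strict Implicit. Unset Printing Implicit Defensive.
Import Order.TTheory GRing.Theory Num.Theory.
Local Open Scope ring_scope.

Section NonArch.
Variables (R : realType) (K : fieldType) (abs : K -> R).

Definition is_nonarch_abs : Prop :=
  [/\ forall x, 0 <= abs x,
      forall x, abs x = 0 <-> x = 0,
      forall x y, abs (x * y) = abs x * abs y &
      forall x y, abs (x + y) <= Num.max (abs x) (abs y)].

Definition abs_nontrivial : Prop := exists x : K, abs x != 0 /\ abs x != 1.

Definition abs_cvg (u : nat -> K) (l : K) : Prop :=
  forall eps : R, 0 < eps -> exists M : nat, forall n, (M <= n)%N -> abs (u n - l) < eps.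

Definition abs_complete : Prop :=
  forall u : nat -> K,
    (forall eps : R, 0 < eps -> exists M : nat,
        forall m n, (M <= m)%N -> (M <= n)%N -> abs (u m - u n) < eps) ->
    exists l, abs_cvg u l.

Definition in_value_group (r : R) : Prop := exists t : K, t != 0 /\ abs t = r.

Variable N : nat.

Definition vnorm (x : 'I_N -> K) : R := \big[Num.max/0]_(i < N) abs (x i).

Definition cball (a : 'I_N -> K) (r : R) : set ('I_N -> K) :=
  [set x | vnorm (fun i => x i - a i) <= r].

Definition mindex := 'I_N -> nat.
Definition mdeg (i : mindex) : nat := (\sum_(j < N) i j)%N.

(* formal power series centered at a: coefficient family *)
Definition pseries := mindex -> K.

Definition analytic_on (r : R) (c : pseries) : Prop :=
  forall eps : R, 0 < eps -> exists M : nat,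
    forall i : mindex, (M <= mdeg i)%N -> abs (c i) * r ^+ mdeg i < eps.

Definition monom (a x : 'I_N -> K) (i : mindex) : K :=
  \prod_(j < N) (x j - a j) ^+ i j.

Definition psum (c : pseries) (a x : 'I_N -> K) (M : nat) : K :=
  \sum_(i : {ffun 'I_N -> 'I_M.+1} | (\sum_(j < N) (i j : nat) <= M)%N)
     c (fun j => (i j : nat)) * monom a x (fun j => (i j : nat)).

Definition peval (c : pseries) (a x : 'I_N -> K) : K :=
  xget 0 [set v | abs_cvg (psum c a x) v].

End NonArch.

(* Main.v *)
Require Import Defs.
From mathcomp Require Import all_boot all_order all_algebra.
From mathcomp Require Import boolp classical_sets reals.
From mathcomp Require Import ring lra zify.
Import Order.TTheory GRing.Theory Num.Theory.
Set Implicit Arguments. Unset Strict Implicit.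

Lemma digit_step (D f0 g0 S1 S2 : nat) : 0 < D -> f0 < D -> g0 < D ->
  f0 + D * S1 = g0 + D * S2 -> f0 = g0 /\ S1 = S2.
Proof.
move=> D0 hf hg e.
have e0 : f0 = g0.
  have := congr1 (fun x => x %% D) e => /=.
  by rewrite ![_ + D * _]addnC ![D * _]mulnC !modnMDl !modn_small.
split => //; subst g0; move/eqP: e; rewrite eqn_add2l eqn_pmul2l //; by move/eqP.
Qed.

Lemma digits_inj (D : nat) : 0 < D -> forall n (f g : 'I_n -> nat),
  (forall k, f k < D) -> (forall k, g k < D) ->
  \sum_(k < n) f k * D ^ k = \sum_(k < n) g k * D ^ k -> forall k, f k = g k.
Proof.
move=> D0; elim=> [|n IH] f g hf hg e k; first by case: k.
move: e; rewrite !big_ord_recl /= !expn0 !muln1.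
have sh : forall h : 'I_n.+1 -> nat, \sum_(i < n) h (lift ord0 i) * D ^ (bump 0 i)
    = D * \sum_(i < n) h (lift ord0 i) * D ^ i.
  move=> h; rewrite big_distrr /=; apply: eq_bigr => i _.
  by rewrite /bump /= add1n expnS mulnCA.
rewrite !sh => e.
have [e0 e1] := digit_step D0 (hf ord0) (hg ord0) e.
have IH' := IH (fun i => f (lift ord0 i)) (fun i => g (lift ord0 i)) (fun i => hf _) (fun i => hg _) e1.
case: (unliftP ord0 k) => [j ->|->] //.
Qed.

Local Open Scope ring_scope.

Lemma nmax_le (R : realType) (a b c : R) : a <= c -> b <= c -> Num.max a b <= c.
Proof. by move=> h1 h2; rewrite ge_max h1 h2. Qed.

Lemma abs_ge0 (R : realType) (K : fieldType) (abs : K -> R) :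
  is_nonarch_abs abs -> forall x, 0 <= abs x.
Proof. by case. Qed.

Lemma abs0 (R : realType) (K : fieldType) (abs : K -> R) :
  is_nonarch_abs abs -> abs 0 = 0.
Proof. by case=> _ h _ _; apply/h. Qed.

Lemma absM (R : realType) (K : fieldType) (abs : K -> R) :
  is_nonarch_abs abs -> forall x y, abs (x * y) = abs x * abs y.
Proof. by case. Qed.

Lemma absD (R : realType) (K : fieldType) (abs : K -> R) :
  is_nonarch_abs abs -> forall x y, abs (x + y) <= Num.max (abs x) (abs y).
Proof. by case. Qed.

Lemma abs1 (R : realType) (K : fieldType) (abs : K -> R) :
  is_nonarch_abs abs -> abs 1 = 1.
Proof.
move=> h; have e : abs 1 = abs 1 * abs 1 by rewrite -absM // mulr1.
have nz : abs 1 != 0.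
  apply/eqP; case: h => _ h _ _ /h /eqP; by rewrite oner_eq0.
have : abs 1 * (abs 1 - 1) = 0 by rewrite mulrBr mulr1 -e subrr.
by move/eqP; rewrite mulf_eq0 (negbTE nz) /= subr_eq0 => /eqP.
Qed.

Lemma absN (R : realType) (K : fieldType) (abs : K -> R) :
  is_nonarch_abs abs -> forall x, abs (- x) = abs x.
Proof.
move=> h x.
have e : abs (-1) * abs (-1) = 1 by rewrite -absM // mulrNN mulr1 abs1.
have p := abs_ge0 h (-1).
have e1 : abs (-1) = 1.
  have : (abs (-1) - 1) * (abs (-1) + 1) = 0.
    by rewrite mulrDr mulr1 mulrBl e mul1r; ring.
  move/eqP; rewrite mulf_eq0 => /orP [/eqP|/eqP]; first by move/eqP; rewrite subr_eq0 => /eqP.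
  move=> h2; exfalso; lra.
by rewrite -mulN1r absM // e1 mul1r.
Qed.

Lemma absB (R : realType) (K : fieldType) (abs : K -> R) :
  is_nonarch_abs abs -> forall x y, abs (x - y) <= Num.max (abs x) (abs y).
Proof. by move=> h x y; rewrite -(absN h y); apply: absD. Qed.

Lemma absBC (R : realType) (K : fieldType) (abs : K -> R) :
  is_nonarch_abs abs -> forall x y, abs (x - y) = abs (y - x).
Proof. by move=> h x y; rewrite -absN // opprB. Qed.

Lemma absX (R : realType) (K : fieldType) (abs : K -> R) :
  is_nonarch_abs abs -> forall x n, abs (x ^+ n) = abs x ^+ n.
Proof.
move=> h x; elim=> [|n IH]; first by rewrite !expr0 abs1.
by rewrite !exprS absM // IH.
Qed.

Lemma absD_le (R : realType) (K : fieldType) (abs : K -> R) :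
  is_nonarch_abs abs -> forall x y B, abs x <= B -> abs y <= B -> abs (x + y) <= B.
Proof. move=> h x y B h1 h2; apply: le_trans (absD h x y) _; exact: nmax_le. Qed.

Lemma absB_le (R : realType) (K : fieldType) (abs : K -> R) :
  is_nonarch_abs abs -> forall x y B, abs x <= B -> abs y <= B -> abs (x - y) <= B.
Proof. move=> h x y B h1 h2; apply: absD_le => //; by rewrite absN. Qed.

Lemma absD_lt (R : realType) (K : fieldType) (abs : K -> R) :
  is_nonarch_abs abs -> forall x y B, abs x < B -> abs y < B -> abs (x + y) < B.
Proof. move=> h x y B h1 h2; apply: le_lt_trans (absD h x y) _; by rewrite gt_max h1 h2. Qed.

Lemma absD_dom (R : realType) (K : fieldType) (abs : K -> R) :
  is_nonarch_abs abs -> forall x y, abs y < abs x -> abs x <= abs (x + y).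
Proof.
move=> h x y lt.
have := absD h (x + y) (- y); rewrite addrK absN // => H.
move: H; rewrite le_max => /orP [//|H]; exfalso; move: H lt; lra.
Qed.

Lemma abs_sum_le (R : realType) (K : fieldType) (abs : K -> R) :
  is_nonarch_abs abs -> forall (I : Type) (s : seq I) (P : pred I) (F : I -> K) B,
  0 <= B -> (forall i, P i -> abs (F i) <= B) -> abs (\sum_(i <- s | P i) F i) <= B.
Proof.
move=> h I s P F B B0 hF.
apply: (big_ind (fun v => abs v <= B)); first by rewrite abs0.
  by move=> u v; apply: absD_le.
exact: hF.
Qed.

Lemma abs_sum_lt (R : realType) (K : fieldType) (abs : K -> R) :
  is_nonarch_abs abs -> forall (I : Type) (s : seq I) (P : pred I) (F : I -> K) B,
  0 < B -> (forall i, P i -> abs (F i) < B) -> abs (\sum_(i <- s | P i) F i) < B.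
Proof.
move=> h I s P F B B0 hF.
apply: (big_ind (fun v => abs v < B)); first by rewrite abs0.
  by move=> u v; apply: absD_lt.
exact: hF.
Qed.

Lemma abs_prod (R : realType) (K : fieldType) (abs : K -> R) :
  is_nonarch_abs abs -> forall (I : Type) (s : seq I) (F : I -> K),
  abs (\prod_(i <- s) F i) = \prod_(i <- s) abs (F i).
Proof.
move=> h I s F; elim: s => [|x s IH]; first by rewrite !big_nil abs1.
by rewrite !big_cons absM // IH.
Qed.

Lemma lim_le (R : realType) (K : fieldType) (abs : K -> R) :
  is_nonarch_abs abs -> forall u l B M, abs_cvg abs u l ->
  (forall n, (M <= n)%N -> abs (u n) <= B) -> abs l <= B.
Proof.
move=> h u l B M cv hb; rewrite leNgt; apply/negP => lt.
have B0 : 0 <= B by apply: le_trans (hb M (leqnn M)); apply: abs_ge0.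
have [M' HM'] := cv (abs l - B) ltac:(lra).
have := absD h (u (maxn M M')) (l - u (maxn M M')); rewrite addrC subrK.
rewrite le_max => /orP [H|H].
  have := hb (maxn M M') (leq_maxl _ _); lra.
have := HM' (maxn M M') (leq_maxr _ _); rewrite absBC //; lra.
Qed.

Lemma lim_ge (R : realType) (K : fieldType) (abs : K -> R) :
  is_nonarch_abs abs -> forall u l B M, abs_cvg abs u l ->
  (forall n, (M <= n)%N -> B <= abs (u n)) -> B <= abs l.
Proof.
move=> h u l B M cv hb; rewrite leNgt; apply/negP => lt.
have [M' HM'] := cv (B - abs l) ltac:(lra).
have := absD h l (u (maxn M M') - l); rewrite addrC subrK.
rewrite le_max => /orP [H|H].
  have := hb (maxn M M') (leq_maxl _ _); lra.
have := HM' (maxn M M') (leq_maxr _ _); have := hb (maxn M M') (leq_maxl _ _).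
have := abs_ge0 h l; lra.
Qed.

Lemma lim_sub (R : realType) (K : fieldType) (abs : K -> R) :
  is_nonarch_abs abs -> forall u v l l', abs_cvg abs u l -> abs_cvg abs v l' ->
  abs_cvg abs (fun n => u n - v n) (l - l').
Proof.
move=> h u v l l' cu cv eps e0.
have [M1 H1] := cu eps e0; have [M2 H2] := cv eps e0.
exists (maxn M1 M2) => n hn.
have -> : u n - v n - (l - l') = (u n - l) - (v n - l') by ring.
apply: le_lt_trans (absB h _ _) _; rewrite gt_max.
rewrite H1 ?H2 //; [exact: leq_trans (leq_maxr _ _) hn | exact: leq_trans (leq_maxl _ _) hn].
Qed.


Lemma sum_widen (V : nmodType) (N k1 k2 : nat) (le : (k1.+1 <= k2.+1)%N)
  (P : mindex N -> bool) (F : mindex N -> V) :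
  (forall i : mindex N, P i -> forall j, (i j < k1.+1)%N) ->
  \sum_(i : {ffun 'I_N -> 'I_k1.+1} | P (fun j => (i j : nat))) F (fun j => (i j : nat)) =
  \sum_(i : {ffun 'I_N -> 'I_k2.+1} | P (fun j => (i j : nat))) F (fun j => (i j : nat)).
Proof.
move=> hP.
pose h := fun i : {ffun 'I_N -> 'I_k1.+1} => [ffun j => widen_ord le (i j)].
pose h' := fun i : {ffun 'I_N -> 'I_k2.+1} => [ffun j => (inord (i j) : 'I_k1.+1)].
have hv : forall i, (fun j => (h i j : nat)) = (fun j => (i j : nat)).
  by move=> i; apply: funext => j; rewrite /h ffunE.
rewrite (reindex_onto h h' (P := fun i : {ffun 'I_N -> 'I_k2.+1} => P (fun j => (i j : nat)))).
  apply: eq_big => i.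
    rewrite hv; have -> : h' (h i) == i; last by rewrite andbT.
    apply/eqP/ffunP => j; rewrite /h' /h !ffunE /=; apply/val_inj => /=.
    by rewrite inordK.
  by rewrite hv.
move=> i Pi; apply/ffunP => j; rewrite /h /h' !ffunE; apply/val_inj => /=.
by rewrite inordK //; apply: (hP _ Pi).
Qed.


Lemma psumE (K : fieldType) (N : nat) (c : pseries K N) a x M :
  psum c a x M = \sum_(i : {ffun 'I_N -> 'I_M.+1} | (mdeg (fun j => (i j : nat)) <= M)%N)
     c (fun j => (i j : nat)) * monom a x (fun j => (i j : nat)).
Proof. by []. Qed.

Lemma mdeg_ge (N : nat) (i : mindex N) j : (i j <= mdeg i)%N.
Proof. by rewrite /mdeg (bigD1 j) //= leq_addr. Qed.

Lemma psum_diff (K : fieldType) (N : nat) (c : pseries K N) a x M n :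
  (M <= n)%N ->
  psum c a x n - psum c a x M =
  \sum_(i : {ffun 'I_N -> 'I_n.+1} | (mdeg (fun j => (i j : nat)) <= n)%N
          && ~~ (mdeg (fun j => (i j : nat)) <= M)%N)
     c (fun j => (i j : nat)) * monom a x (fun j => (i j : nat)).
Proof.
move=> Mn; rewrite !psumE.
rewrite (@sum_widen _ N M n _ (fun i => (mdeg i <= M)%N)
   (fun i => c i * monom a x i)); last first.
  by move=> i Hi j; rewrite ltnS; apply: leq_trans (mdeg_ge i j) Hi.
  by [].
rewrite (bigID (fun i : {ffun 'I_N -> 'I_n.+1} => (mdeg (fun j => (i j : nat)) <= M)%N)) /=.
rewrite addrC -addrA.
have -> : \sum_(i : {ffun 'I_N -> 'I_n.+1} | (mdeg (fun j => (i j : nat)) <= n)%N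
          && (mdeg (fun j => (i j : nat)) <= M)%N)
     c (fun j => (i j : nat)) * monom a x (fun j => (i j : nat)) =
  \sum_(i : {ffun 'I_N -> 'I_n.+1} | (mdeg (fun j => (i j : nat)) <= M)%N)
     c (fun j => (i j : nat)) * monom a x (fun j => (i j : nat)).
  apply: eq_bigl => i; case e: (_ <= M)%N; rewrite ?andbF ?andbT //.
  exact: leq_trans e Mn.
by rewrite subrr addr0.
Qed.

Lemma vnorm_ge (R : realType) (K : fieldType) (abs : K -> R) N (v : 'I_N -> K) j :
  abs (v j) <= vnorm abs v.
Proof. rewrite /vnorm; exact: (le_bigmax _ (fun i => abs (v i)) j). Qed.

Lemma vnorm_le (R : realType) (K : fieldType) (abs : K -> R) N (v : 'I_N -> K) B :
  0 <= B -> (forall j, abs (v j) <= B) -> vnorm abs v <= B.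
Proof. by move=> B0 h; rewrite /vnorm; apply: bigmax_le. Qed.

Lemma vnorm_ge0 (R : realType) (K : fieldType) (abs : K -> R) :
  is_nonarch_abs abs -> forall N (v : 'I_N -> K), 0 <= vnorm abs v.
Proof.
move=> h N v; rewrite /vnorm; elim/big_ind: _ => //.
  by move=> u w h1 h2; rewrite le_max h1.
move=> i _; exact: abs_ge0.
Qed.

Lemma monom_le (R : realType) (K : fieldType) (abs : K -> R) :
  is_nonarch_abs abs -> forall N (a x : 'I_N -> K) r i, cball abs a r x ->
  abs (monom a x i) <= r ^+ mdeg i.
Proof.
move=> h N a x r i hx.
rewrite /monom abs_prod // /mdeg -prodrXr.
apply: ler_prod => j _; rewrite absX // exprn_ge0 ?abs_ge0 //=.
apply: lerXn2r; rewrite ?nnegrE ?abs_ge0 //.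
  apply: le_trans (abs_ge0 h (x j - a j)) _; apply: le_trans (vnorm_ge abs _ j) hx.
exact: le_trans (vnorm_ge abs (fun j => x j - a j) j) hx.
Qed.

Lemma psum_cvg (R : realType) (K : fieldType) (abs : K -> R) :
  is_nonarch_abs abs -> abs_complete abs -> forall N (c : pseries K N) a x r,
  0 <= r -> analytic_on abs r c -> cball abs a r x ->
  abs_cvg abs (psum c a x) (peval abs c a x).
Proof.
move=> h hc N c a x r r0 an hx.
have cauchy : forall eps, 0 < eps -> exists M : nat, forall n, (M <= n)%N ->
    abs (psum c a x n - psum c a x M) < eps.
  move=> eps e0; have [M HM] := an eps e0; exists M => n Mn.
  rewrite psum_diff //; apply: abs_sum_lt => // i /andP [_ Hi].
  rewrite -ltnNge in Hi.
  rewrite absM //; apply: le_lt_trans (HM _ (ltnW Hi)).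
  apply: ler_wpM2l; first exact: abs_ge0.
  exact: monom_le.
have [l Hl] : exists l, abs_cvg abs (psum c a x) l.
  apply: hc => eps e0; have [M HM] := cauchy eps e0; exists M => m n hm hn.
  have -> : psum c a x m - psum c a x n =
     (psum c a x m - psum c a x M) - (psum c a x n - psum c a x M) by ring.
  apply: le_lt_trans (absB h _ _) _; rewrite gt_max !HM //.
rewrite /peval; apply: (@xgetPex _ 0 [set v | abs_cvg abs (psum c a x) v]).
by exists l.
Qed.


Lemma absD_le_r (R : realType) (K : fieldType) (abs : K -> R) :
  is_nonarch_abs abs -> forall X Y (r T : R), 0 <= r ->
  abs X * r <= T -> abs Y * r <= T -> abs (X + Y) * r <= T.
Proof.
move=> h X Y r T r0 h1 h2.
have := absD h X Y; rewrite le_max => /orP [H|H].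
  by apply: le_trans h1; apply: ler_wpM2r.
by apply: le_trans h2; apply: ler_wpM2r.
Qed.

Lemma powdiff (R : realType) (K : fieldType) (abs : K -> R) :
  is_nonarch_abs abs -> forall (u v : K) (r d : R) n, 0 <= r -> 0 <= d ->
  abs u <= r -> abs v <= r -> abs (u - v) <= d ->
  abs (u ^+ n - v ^+ n) * r <= d * r ^+ n.
Proof.
move=> h u v r d n r0 d0 hu hv huv; elim: n => [|n IH].
  by rewrite !expr0 subrr abs0 // mul0r mulr1.
have -> : u ^+ n.+1 - v ^+ n.+1 = (u - v) * u ^+ n + v * (u ^+ n - v ^+ n).
  by rewrite !exprS; ring.
apply: absD_le_r => //.
  rewrite absM // absX // exprSr mulrA.
  apply: ler_wpM2r => //; apply: ler_pM; rewrite ?(abs_ge0 h) ?exprn_ge0 ?(abs_ge0 h) //.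
  by apply: lerXn2r; rewrite ?nnegrE ?(abs_ge0 h).
rewrite absM // -mulrA.
have -> : d * r ^+ n.+1 = r * (d * r ^+ n) by rewrite exprSr; ring.
by apply: ler_pM; rewrite ?mulr_ge0 ?(abs_ge0 h) //.
Qed.

Lemma proddiff (R : realType) (K : fieldType) (abs : K -> R) :
  is_nonarch_abs abs -> forall (I : Type) (s : seq I) (U V : I -> K) (ns : I -> nat) (r d : R),
  0 <= r -> 0 <= d ->
  (forall j, abs (U j) <= r ^+ ns j) -> (forall j, abs (V j) <= r ^+ ns j) ->
  (forall j, abs (U j - V j) * r <= d * r ^+ ns j) ->
  abs (\prod_(j <- s) U j - \prod_(j <- s) V j) * r <= d * r ^+ (\sum_(j <- s) ns j).
Proof.
move=> h I s U V ns r d r0 d0 hU hV hUV.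
have hPU : forall s, abs (\prod_(j <- s) U j) <= r ^+ (\sum_(j <- s) ns j).
  move=> s'; rewrite abs_prod // -prodrXr; apply: ler_prod => j _.
  by rewrite (abs_ge0 h) hU.
elim: s => [|x s IH]; first by rewrite !big_nil subrr abs0 // mul0r mulr_ge0 ?exprn_ge0.
rewrite !big_cons.
have -> : U x * \prod_(j <- s) U j - V x * \prod_(j <- s) V j =
   (U x - V x) * \prod_(j <- s) U j + V x * (\prod_(j <- s) U j - \prod_(j <- s) V j).
  ring.
apply: absD_le_r => //.
  rewrite absM // mulrC mulrA exprD mulrA.
  apply: ler_pM; rewrite ?mulr_ge0 ?(abs_ge0 h) //.
  by rewrite mulrC.
rewrite absM // -mulrA.
have -> : d * r ^+ (ns x + \sum_(j <- s) ns j) = r ^+ ns x * (d * r ^+ (\sum_(j <- s) ns j)).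
  by rewrite exprD; ring.
by apply: ler_pM; rewrite ?mulr_ge0 ?(abs_ge0 h) //.
Qed.

Lemma monom_diff (R : realType) (K : fieldType) (abs : K -> R) :
  is_nonarch_abs abs -> forall N (a x y : 'I_N -> K) r i, 0 <= r ->
  cball abs a r x -> cball abs a r y ->
  abs (monom a x i - monom a y i) * r <= vnorm abs (fun j => x j - y j) * r ^+ mdeg i.
Proof.
move=> h N a x y r i r0 hx hy; rewrite /monom /mdeg.
have hxj : forall j, abs (x j - a j) <= r.
  move=> j; exact: le_trans (vnorm_ge abs (fun j => x j - a j) j) hx.
have hyj : forall j, abs (y j - a j) <= r.
  move=> j; exact: le_trans (vnorm_ge abs (fun j => y j - a j) j) hy.
apply: proddiff => //; first exact: vnorm_ge0.
- move=> j; rewrite absX //; apply: lerXn2r; rewrite ?nnegrE ?(abs_ge0 h) //.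
- move=> j; rewrite absX //; apply: lerXn2r; rewrite ?nnegrE ?(abs_ge0 h) //.
move=> j; apply: powdiff => //; first exact: vnorm_ge0.
have -> : x j - a j - (y j - a j) = x j - y j by ring.
exact: (vnorm_ge abs (fun j => x j - y j) j).
Qed.

Lemma lipschitz (R : realType) (K : fieldType) (abs : K -> R) :
  is_nonarch_abs abs -> abs_complete abs -> forall N (c : pseries K N) a x y r C,
  0 < r -> analytic_on abs r c -> 0 <= C -> (forall i, abs (c i) * r ^+ mdeg i <= C) ->
  cball abs a r x -> cball abs a r y ->
  abs (peval abs c a x - peval abs c a y) <= C / r * vnorm abs (fun j => x j - y j).
Proof.
move=> h hc N c a x y r C r0 an C0 hG hx hy.
have cx := psum_cvg h hc (ltW r0) an hx.
have cy := psum_cvg h hc (ltW r0) an hy.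
apply: (lim_le h (M := 0%N) (lim_sub h cx cy)) => n _.
rewrite !psumE -sumrB; apply: abs_sum_le => //.
  by rewrite mulr_ge0 ?divr_ge0 ?vnorm_ge0 // ltW.
move=> i _; rewrite -mulrBr absM // mulrAC ler_pdivlMr //.
rewrite -mulrA; apply: le_trans (ler_wpM2l (abs_ge0 h _) (monom_diff h _ (ltW r0) hx hy)) _.
rewrite mulrCA (mulrC C); apply: ler_wpM2l; first exact: vnorm_ge0.
exact: hG.
Qed.


Lemma prod_gt1 (R : realType) (I : eqType) (s : seq I) (f : I -> R) :
  (forall i, i \in s -> 1 < f i) -> s != [::] -> 1 < \prod_(i <- s) f i.
Proof.
elim: s => [|x s IH] // hf _; rewrite big_cons.
have hx : 1 < f x by apply: hf; rewrite mem_head.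
case: (eqVneq s [::]) => [->|ne]; first by rewrite big_nil mulr1.
have := IH (fun i hi => hf i (ltac:(by rewrite inE hi orbT))) ne; nra.
Qed.

Lemma prod_le1 (R : realType) (I : eqType) (s : seq I) (f : I -> R) :
  (forall i, i \in s -> 0 <= f i <= 1) -> 0 <= \prod_(i <- s) f i <= 1.
Proof.
elim: s => [|x s IH] hf; first by rewrite big_nil ler01 lexx.
rewrite big_cons.
have /andP [H1 H2] := IH (fun j hj => hf j (ltac:(by rewrite inE hj orbT))).
have /andP [H3 H4] := hf x (mem_head _ _).
apply/andP; split; nra.
Qed.

Lemma prod_eq1 (R : realType) (I : eqType) (s : seq I) (f : I -> R) :
  (forall i, i \in s -> 0 <= f i <= 1) -> \prod_(i <- s) f i = 1 ->
  forall i, i \in s -> 1 <= f i.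
Proof.
elim: s => [|x s IH] // hf; rewrite big_cons => e i.
have hs : forall j, j \in s -> 0 <= f j <= 1.
  by move=> j hj; apply: hf; rewrite inE hj orbT.
have /andP [hP1 hP2] := prod_le1 hs.
have /andP [hx1 hx2] := hf x (mem_head _ _).
have ex : f x = 1 by nra.
have eP : \prod_(j <- s) f j = 1 by nra.
rewrite inE => /orP [/eqP ->|hi]; first by rewrite ex.
exact: IH.
Qed.

Lemma avoid (R : realType) (K : closedFieldType) (abs : K -> R) :
  is_nonarch_abs abs -> forall B : seq K, (forall b, b \in B -> abs b <= 1) ->
  exists u, abs u <= 1 /\ forall b, b \in B -> 1 <= abs (u - b).
Proof.
move=> h B hB.
case: (eqVneq B [::]) => [eB|ne].
  by exists 0; split; [rewrite abs0 // ler01 | rewrite eB].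
pose p := \prod_(b <- B) ('X - b%:P) - 1 : {poly K}.
have sp : size p = (size B).+1.
  rewrite /p size_polyDl size_prod_XsubC // size_polyN size_poly1.
  by rewrite ltnS lt0n size_eq0.
have [u ru] : exists u, root p u.
  by apply/closed_rootP; rewrite sp eqSS size_eq0.
have eu : \prod_(b <- B) (u - b) = 1.
  move: ru; rewrite /root /p hornerD hornerN hornerC horner_prod subr_eq0.
  by under eq_bigr do rewrite hornerXsubC; move/eqP.
have eabs : \prod_(b <- B) abs (u - b) = 1 by rewrite -abs_prod // eu abs1.
have u1 : abs u <= 1.
  rewrite leNgt; apply/negP => lt.
  have : 1 < \prod_(b <- B) abs (u - b).
    apply: prod_gt1 => // b hb.
    have := hB b hb => hb1.
    have : abs u <= abs (u - b) by apply: absD_dom => //; rewrite (absN h); lra.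
    lra.
  by rewrite eabs ltxx.
exists u; split => //; apply: prod_eq1 eabs => b hb.
by rewrite (abs_ge0 h) /=; apply: absB_le => //; apply: hB.
Qed.


Lemma univ_maxmod (R : realType) (K : closedFieldType) (abs : K -> R) :
  is_nonarch_abs abs -> forall n (Q : {poly K}), (size Q <= n)%N ->
  forall B : seq K, (forall b, b \in B -> abs b <= 1) ->
  exists w, [/\ abs w <= 1, (forall b, b \in B -> 1 <= abs (w - b)) &
               forall k, abs Q`_k <= abs Q.[w]].
Proof.
move=> h.
have z0 : forall x : K, abs 0 <= abs x.
  move=> x; apply: (le_trans _ (abs_ge0 h _)); rewrite le_eqVlt; apply/orP; left; apply/eqP; exact: (abs0 h).
elim=> [|n IH] Q sQ B hB.
  have [u [u1 hu]] := avoid h hB.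
  exists u; split => // k.
  move: sQ; rewrite leqn0 size_poly_eq0 => /eqP ->.
  by rewrite coef0; apply: z0.
have [b0 [b01 hb0]] := avoid h hB.
case: (pselect (exists k, abs Q.[b0] < abs Q`_k)) => [[k1 hk1]|nk]; last first.
  exists b0; split => // k; rewrite leNgt; apply/negP => H; apply: nk; by exists k.
pose Q' := Q %/ ('X - b0%:P).
have eQ : Q = Q' * ('X - b0%:P) + (Q.[b0])%:P.
  by rewrite {1}(divp_eq Q ('X - b0%:P)) modp_XsubC.
have sQ' : (size Q' <= n)%N.
  rewrite /Q' size_divp ?polyXsubC_eq0 // size_XsubC /=.
  by rewrite leq_subLR add1n.
have hB' : forall b, b \in b0 :: B -> abs b <= 1.
  by move=> b; rewrite inE => /orP [/eqP ->|]; [| apply: hB].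
have [w [w1 hwB hw]] := IH Q' sQ' (b0 :: B) hB'.
have wb0 : 1 <= abs (w - b0) by apply: hwB; rewrite mem_head.
have cP : forall k, abs (Q' * ('X - b0%:P))`_k <= abs Q'.[w].
  move=> k; rewrite mulrBr coefB coefMX coefMC; apply: absB_le => //.
    by case: (k == 0)%N; [apply: z0 | apply: hw].
  rewrite (absM h); have := hw k; have := abs_ge0 h Q'`_k; have := abs_ge0 h b0; nra.
have cQ : forall k, abs Q`_k <= Num.max (abs (Q' * ('X - b0%:P))`_k) (abs Q.[b0]).
  move=> k; rewrite {1}eQ coefD coefC.
  apply: le_trans (absD h _ _) _; rewrite ge_max le_max lexx /=.
  case: (k == 0)%N; [by rewrite le_max lexx orbT | by rewrite le_max; apply/orP; right; apply: z0].
pose E := Q'.[w] * (w - b0).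
have hE : abs Q'.[w] <= abs E.
  rewrite /E absM //; have := abs_ge0 h Q'.[w]; nra.
have lt0 : abs Q.[b0] < abs E.
  have := cQ k1; rewrite le_max => /orP [H|H]; last by exfalso; move: H hk1; lra.
  have := cP k1; move: H hk1 hE; lra.
have eQw : Q.[w] = E + Q.[b0].
  by rewrite {1}eQ hornerD hornerM hornerXsubC hornerC.
have hQw : abs E <= abs Q.[w] by rewrite eQw; apply: absD_dom.
exists w; split => //.
  by move=> b hb; apply: hwB; rewrite inE hb orbT.
move=> k; have := cP k; have := cQ k; rewrite le_max => /orP [H|H]; lra.
Qed.


Lemma cauchy_est (R : realType) (K : closedFieldType) (abs : K -> R) :
  is_nonarch_abs abs -> abs_complete abs -> forall N (c : pseries K N) a r C,
  in_value_group abs r -> analytic_on abs r c -> 0 <= C ->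
  (forall x, cball abs a r x -> abs (peval abs c a x) <= C) ->
  forall i0, abs (c i0) * r ^+ mdeg i0 <= C.
Proof.
move=> h hc N c a r C [t [tnz tr]] an C0 hb i0.
set m := abs (c i0) * r ^+ mdeg i0.
case: (lerP m 0) => [m0|mpos]; first exact: le_trans m0 C0.
have r0 : 0 < r.
  rewrite -tr lt_def (abs_ge0 h) andbT; apply/eqP; case: h => _ hh _ _ /hh.
  by move/eqP: tnz.
have [M0 HM0] := an m mpos.
have dlt : (mdeg i0 < M0)%N.
  rewrite ltnNge; apply/negP => H; have := HM0 i0 H; rewrite -/m ltxx //.
pose D := M0.+1.
pose enc := fun i : mindex N => (\sum_(j < N) i j * D ^ j)%N.
pose e := fun i : mindex N => c i * t ^+ mdeg i.
pose Q : {poly K} := \sum_(i : {ffun 'I_N -> 'I_M0.+1} | (mdeg (fun j => (i j : nat)) < M0)%N)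
   e (fun j => (i j : nat)) *: 'X^(enc (fun j => (i j : nat))).
pose i0' : {ffun 'I_N -> 'I_M0.+1} := [ffun j => inord (i0 j)].
have hi0 : (fun j => (i0' j : nat)) = i0.
  apply: funext => j; rewrite /i0' ffunE. apply: inordK; rewrite ltnS.
  exact: leq_trans (mdeg_ge i0 j) (ltnW dlt).
have cQ : Q`_(enc i0) = e i0.
  rewrite /Q coef_sum (bigD1 i0') /=; last by rewrite hi0.
  rewrite coefZ coefXn hi0 eqxx mulr1 big1 ?addr0 // => i /andP [_ ne].
  rewrite coefZ coefXn.
  case: eqP => [E|]; last by rewrite mulr0.
  exfalso; move/eqP: ne; apply; apply/ffunP => j; apply/val_inj.
  have hk1 : forall k, (i0 k < D)%N.
    move=> k; rewrite /D ltnS; exact: leq_trans (mdeg_ge i0 k) (ltnW dlt).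
  have hk2 : forall k, ((fun j => (i j : nat)) k < D)%N by move=> k; exact: ltn_ord.
  have := @digits_inj D (ltn0Sn _) N i0 (fun j => (i j : nat)) hk1 hk2 E j.
  rewrite /i0' ffunE /= => <-; symmetry.
  exact: (@inordK M0 (i0 j) (hk1 j)).
have [w [w1 _ hw]] := univ_maxmod h (leqnn (size Q)) (B := [::]) (fun b hb => ltac:(by [])).
pose x := fun j : 'I_N => t * w ^+ (D ^ j) + a j.
have hxa : forall j, x j - a j = t * w ^+ (D ^ j) by move=> j; rewrite /x addrK.
have hx : cball abs a r x.
  rewrite /cball /=; apply: vnorm_le; first exact: ltW.
  move=> j; rewrite hxa (absM h) (absX h) tr.
  have := @exprn_ile1 _ (D ^ j) (abs w) (abs_ge0 h w) w1.
  have := @exprn_ge0 _ (D ^ j) (abs w) (abs_ge0 h w).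
  have := ltW r0; nra.
have hmon : forall i, monom a x i = t ^+ mdeg i * w ^+ enc i.
  move=> i; rewrite /monom.
  have -> : \prod_(j < N) (x j - a j) ^+ i j = \prod_(j < N) (t ^+ i j * w ^+ (i j * D ^ j)).
    by apply: eq_bigr => j _; rewrite hxa exprMn -exprM mulnC.
  by rewrite big_split /= !prodrXr.
have cv := psum_cvg h hc (ltW r0) an hx.
have : m <= abs (peval abs c a x).
  apply: (lim_ge h (M := M0) cv) => M hM.
  rewrite psumE (bigID (fun i : {ffun 'I_N -> 'I_M.+1} => (mdeg (fun j => (i j : nat)) < M0)%N)) /=.
  set head := (X in X + _); set tail := (X in _ + X).
  have eh : head = Q.[w].
    rewrite /head.
    have -> : \sum_(i : {ffun 'I_N -> 'I_M.+1} | (mdeg (fun j => (i j : nat)) <= M)%N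
          && (mdeg (fun j => (i j : nat)) < M0)%N)
     c (fun j => (i j : nat)) * monom a x (fun j => (i j : nat)) =
     \sum_(i : {ffun 'I_N -> 'I_M.+1} | (mdeg (fun j => (i j : nat)) < M0)%N)
     c (fun j => (i j : nat)) * monom a x (fun j => (i j : nat)).
      apply: eq_bigl => i; case e1: (_ < M0)%N; rewrite ?andbF ?andbT //.
      exact: leq_trans (ltnW e1) hM.
    rewrite -(@sum_widen _ N M0 M _ (fun i => (mdeg i < M0)%N) (fun i => c i * monom a x i)); last first.
      by move=> i Hi j; rewrite ltnS; apply: leq_trans (mdeg_ge i j) (ltnW Hi).
      by [].
    rewrite /Q horner_sum; apply: eq_bigr => i _.
    by rewrite hornerZ hornerXn hmon /e mulrA.
  have et : abs tail < m.
    rewrite /tail; apply: abs_sum_lt => // i /andP [_ Hi].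
    rewrite -leqNgt in Hi.
    rewrite (absM h); apply: le_lt_trans (HM0 _ Hi).
    apply: ler_wpM2l; first exact: abs_ge0.
    exact: monom_le.
  have hQ : m <= abs Q.[w].
    apply: le_trans (hw (enc i0)); rewrite cQ /e (absM h) (absX h) tr.
    by rewrite /m.
  rewrite eh; have hQ2 := hQ; apply: le_trans hQ _; apply: absD_dom => //; lra.
have := hb x hx; lra.
Qed.


Unset Implicit Arguments. Set Strict Implicit.
Local Open Scope classical_set_scope.

Theorem lemma22 (R : realType) (K : closedFieldType) (abs : K -> R)
  (habs : is_nonarch_abs abs) (hnt : abs_nontrivial abs)
  (hcomp : abs_complete abs)
  (N : nat) (a : 'I_N -> K) (r : R) (hr : in_value_group abs r)
  (A : set (pseries K N))
  (hA : forall Psi, A Psi -> analytic_on abs r Psi)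
  (C : R) (hC : 0 < C)
  (hbound : forall Psi x, A Psi -> cball abs a r x -> abs (peval abs Psi a x) <= C) :
  forall (x y : 'I_N -> K) (Psi Lam : pseries K N),
    cball abs a r x -> cball abs a r y -> A Psi -> A Lam ->
    abs (peval abs Psi a x * peval abs Lam a y - peval abs Psi a y * peval abs Lam a x)
      <= C ^+ 2 / r * vnorm abs (fun i => x i - y i).
Proof.
move=> x y Psi Lam hx hy hP hL.
have r0 : 0 < r.
  case: hr => t [tnz <-]; rewrite lt_def (abs_ge0 habs) andbT; apply/eqP.
  by case: habs => _ hh _ _ /hh; move/eqP: tnz.
have cP := cauchy_est habs hcomp hr (hA Psi hP) (ltW hC) (fun z hz => hbound Psi z hP hz).
have cL := cauchy_est habs hcomp hr (hA Lam hL) (ltW hC) (fun z hz => hbound Lam z hL hz).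
have LP := lipschitz habs hcomp r0 (hA _ hP) (ltW hC) cP hx hy.
have LL := lipschitz habs hcomp r0 (hA _ hL) (ltW hC) cL hx hy.
set d := vnorm abs (fun i => x i - y i) in LP LL *.
set Px := peval abs Psi a x in LP *; set Py := peval abs Psi a y in LP *.
set Lx := peval abs Lam a x in LL *; set Ly := peval abs Lam a y in LL *.
have bLy : abs Ly <= C by apply: hbound.
have bPy : abs Py <= C by apply: hbound.
have d0 : 0 <= d by apply: vnorm_ge0.
have e : Px * Ly - Py * Lx = (Px - Py) * Ly - Py * (Lx - Ly) by ring.
rewrite e; have -> : C ^+ 2 / r * d = (C / r * d) * C by rewrite expr2; field; lra.
apply: absB_le => //; rewrite (absM habs).
  by apply: ler_pM => //; apply: abs_ge0.
rewrite mulrC; apply: ler_pM => //; apply: abs_ge0 habs _.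
Qed.
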